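(* Let $a<b$ be real numbers and let $f:[a,b]\to\mathbb{R}$ be continuous on $[a,b]$ and differentiable on $(a,b)$. If $c,\xi_c$ satisfy $a<\xi_c<c<b$ and $f'(\xi_c)=\frac{f(c)-f(a)}{c-a}$, then there exists $\xi_b\in[\xi_c,b)$ such that $f'(\xi_b)=\frac{f(b)-f(a)}{b-a}$. *)

(* Defs.v *)
From Stdlib Require Import Reals.
Open Scope R_scope.

Definition continuous_on_closed (f : R -> R) (a b : R) : Prop :=
  forall x0, a <= x0 <= b ->
    limit1_in f (fun x => a <= x <= b) (f x0) x0.

(* Main.v *)
Require Import Defs.
From Stdlib Require Import Reals Lra.
Open Scope R_scope.

Lemma ext_cont (a b : R) (f : R -> R) x0 :
  continuous_on_closed f a b -> a < x0 <= b ->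
  continuity_pt (fun x => if Rle_dec x b then f x else f b) x0.
Proof.
  intros Hc Hx. unfold continuity_pt, continue_in, limit1_in, limit_in.
  intros eps He.
  destruct (Hc x0 ltac:(lra) eps He) as [d [Hd Hl]].
  exists (Rmin d (x0 - a)). split. { apply Rmin_pos; lra. }
  intros y [_ Hy]. simpl in *. unfold R_dist in *.
  destruct (Rle_dec x0 b) as [_|]; [|lra].
  assert (Hm1 := Rmin_l d (x0 - a)). assert (Hm2 := Rmin_r d (x0 - a)).
  destruct (Rle_dec y b).
  - apply Hl. split.
    + apply Rabs_def2 in Hy. lra.
    + lra.
  - apply Hl. split. lra.
    apply Rabs_def2 in Hy. apply Rabs_def1; lra.
Qed.

Lemma core (a b : R) (f f' : R -> R) (c xic : R) :
  a < b ->
  continuous_on_closed f a b ->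
  (forall x, a < x < b -> derivable_pt_lim f x (f' x)) ->
  a < xic -> xic < c -> c < b ->
  f' xic = (f c - f a) / (c - a) ->
  f' xic < (f b - f a) / (b - a) ->
  exists xib, xic <= xib < b /\ f' xib = (f b - f a) / (b - a).
Proof.
  intros Hab Hc Hd Ha Hxc Hcb Hmc Hlt.
  set (m := (f b - f a) / (b - a)) in *.
  set (F := fun x => if Rle_dec x b then f x else f b).
  set (H := fun x => F x - m * x).
  assert (HC : forall x, xic <= x <= b -> continuity_pt H x).
  { intros x Hx. unfold H.
    apply (continuity_pt_minus F (fun x => m * x)).
    - apply (ext_cont a b f x Hc). lra.
    - apply (continuity_pt_scal id m x). apply derivable_continuous_pt.
      apply derivable_pt_id. }
  destruct (continuity_ab_min H xic b ltac:(lra) HC) as [Mx [Hmin HMx]].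
  set (Hf := (f - mult_real_fct m id)%F).
  assert (HfH : forall x, x <= b -> Hf x = H x).
  { intros x Hx. unfold Hf, H, F, minus_fct, mult_real_fct, id.
    destruct (Rle_dec x b); [reflexivity|lra]. }
  assert (HD : forall x, a < x < b -> derivable_pt_lim Hf x (f' x - m * 1)).
  { intros x Hx. apply derivable_pt_lim_minus. now apply Hd.
    apply derivable_pt_lim_scal. apply derivable_pt_lim_id. }
  assert (Hcb' : H c < H b).
  { rewrite <- !HfH by lra. unfold Hf, minus_fct, mult_real_fct, id.
    assert (E1 : f b - f a = m * (b - a)). { unfold m. field. lra. }
    assert (E2 : f c - f a = f' xic * (c - a)). { rewrite Hmc. field. lra. }
    nra. }
  assert (HMb : Mx < b).
  { destruct (Rle_lt_or_eq_dec Mx b ltac:(lra)) as [h|h]; [exact h|].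
    subst Mx. specialize (Hmin c ltac:(lra)). lra. }
  assert (HMx' : xic < Mx).
  { destruct (Rle_lt_or_eq_dec xic Mx ltac:(lra)) as [h|h]; [exact h|].
    exfalso. subst Mx.
    set (dd := f' xic - m * 1).
    assert (Hdd : dd < 0) by (unfold dd; lra).
    destruct (HD xic ltac:(lra) (- dd / 2) ltac:(lra)) as [del Hdel].
    set (h0 := Rmin (del / 2) ((c - xic) / 2)).
    assert (Hh1 : h0 <= del / 2) by apply Rmin_l.
    assert (Hh2 : h0 <= (c - xic) / 2) by apply Rmin_r.
    assert (Hdp := cond_pos del).
    assert (Hh0 : 0 < h0). { unfold h0. apply Rmin_pos; lra. }
    specialize (Hdel h0 ltac:(lra)).
    assert (Habs : Rabs h0 < del). { rewrite Rabs_right by lra. lra. }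
    specialize (Hdel Habs).
    apply Rabs_def2 in Hdel.
    assert (Q : (Hf (xic + h0) - Hf xic) / h0 < 0). { unfold dd in *. lra. }
    assert (Q2 : Hf (xic + h0) - Hf xic < 0).
    { apply (Rmult_lt_compat_r h0) in Q; [|lra].
      field_simplify in Q; lra. }
    specialize (Hmin (xic + h0) ltac:(lra)).
    rewrite <- !HfH in Hmin by lra. lra. }
  exists Mx. split. lra.
  assert (pr : derivable_pt Hf Mx).
  { exists (f' Mx - m * 1). apply HD. lra. }
  assert (Z : derive_pt Hf Mx pr = 0).
  { apply (deriv_minimum Hf xic b Mx pr HMx' HMb).
    intros x H1 H2. rewrite !HfH by lra. apply Hmin. lra. }
  rewrite (derive_pt_eq_0 Hf Mx _ pr (HD Mx ltac:(lra))) in Z. lra.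
Qed.

Theorem theorem6 (a b : R) (f f' : R -> R) (c xic : R) :
  a < b ->
  continuous_on_closed f a b ->
  (forall x, a < x < b -> derivable_pt_lim f x (f' x)) ->
  a < xic -> xic < c -> c < b ->
  f' xic = (f c - f a) / (c - a) ->
  exists xib, xic <= xib < b /\ f' xib = (f b - f a) / (b - a).
Proof.
  intros Hab Hc Hd Ha Hxc Hcb Hmc.
  destruct (Rtotal_order (f' xic) ((f b - f a) / (b - a))) as [Hl|[He|Hg]].
  - exact (core a b f f' c xic Hab Hc Hd Ha Hxc Hcb Hmc Hl).
  - exists xic. split; [lra|exact He].
  - destruct (core a b (fun x => - f x) (fun x => - f' x) c xic Hab)
      as [xib [Hx Hy]]; try assumption.
    + intros x0 Hx0. apply limit_Ropp. now apply Hc.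
    + intros x Hx. apply (derivable_pt_lim_opp f). now apply Hd.
    + rewrite Hmc. field. lra.
    + replace ((- f b - - f a) / (b - a)) with (- ((f b - f a) / (b - a)))
        by (field; lra). lra.
    + exists xib. split; [exact Hx|].
      replace ((f b - f a) / (b - a)) with (- ((- f b - - f a) / (b - a)))
        by (field; lra). lra.
Qed.
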